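(* With probability one, $L_\alpha=\mathbb{T}$ for every real $\alpha\in(\widetilde h,\infty)$.
   Context: Let $\mathbb{T}=\mathbb{R}/\mathbb{Z}$ with canonical surjection $\phi:\mathbb{R}\to\mathbb{T}$ and quotient distance $d$. Let $\mathcal{U}=\{\varnothing\}\cup\bigcup_{j\ge1}\{0,1\}^j$ be the set of finite words over $\{0,1\}$; for $u=u_1\dots u_j$ write $|u|=j$ ($|\varnothing|=0$), and let $u\mathcal{U}^*$ denote the words $uw$ with $w$ nonempty. Put $x_u=\phi(\sum_{j=1}^{|u|}u_j2^{-j})$. For each $j\ge0$, $\nu_{0,j},\nu_{1,j}$ are probability measures on $\{0,1\}^2$, and $X=(X_u)_{u\in\mathcal{U}}$ is a $\{0,1\}$-valued process with: for all $u\in\mathcal{U}$, $A\subseteq\{0,1\}^2$, $\mathbb{P}((X_{u0},X_{u1})\in A\mid\mathcal{G}_u)=\nu_{X_u,|u|}(A)$, $\mathcal{G}_u=\sigma(X_v:v\in\mathcal{U}\setminus u\mathcal{U}^* )$. Fix $\underline{h}>0$. Let $\eta_j=1-\nu_{0,j}(\{(0,0)\})$ and $\widetilde h=\inf\{h>0:\sum_j2^{(1-\underline{h}/h)j}\eta_j=\infty\}$ ($\inf\emptyset=\infty$). Let $S=\{u\in\mathcal{U}:X_u=1\}$ and, for $\alpha>\underline{h}$, $L_\alpha=\{x\in\mathbb{T}:d(x,x_u)<2^{-\underline{h}|u|/\alpha}\text{ for infinitely many }u\in S\}$. *)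

(* Defs.v *)
From Stdlib Require Import Reals List.
Open Scope R_scope.

Record is_sigma_algebra {Omega : Type} (F : (Omega -> Prop) -> Prop) : Prop := {
  sa_full  : F (fun _ => True);
  sa_compl : forall E, F E -> F (fun w => ~ E w);
  sa_union : forall E : nat -> Omega -> Prop,
      (forall n, F (E n)) -> F (fun w => exists n, E n w) }.

(** P is a probability measure on the sigma-algebra F (its values outside F are irrelevant). *)
Record is_probability {Omega : Type} (F : (Omega -> Prop) -> Prop)
       (P : (Omega -> Prop) -> R) : Prop := {
  pr_sigma  : is_sigma_algebra F;
  pr_nonneg : forall E, F E -> 0 <= P E;
  pr_full   : P (fun _ => True) = 1;
  pr_countably_additive : forall E : nat -> Omega -> Prop,
      (forall n, F (E n)) ->
      (forall m n, m <> n -> forall w, E m w -> E n w -> False) ->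
      infinite_sum (fun n => P (E n)) (P (fun w => exists n, E n w)) }.

Inductive gen_sigma {Omega I : Type} (Y : I -> Omega -> bool) (V : I -> Prop)
  : (Omega -> Prop) -> Prop :=
| gs_base  : forall v b, V v -> gen_sigma Y V (fun w => Y v w = b)
| gs_full  : gen_sigma Y V (fun _ => True)
| gs_compl : forall E, gen_sigma Y V E -> gen_sigma Y V (fun w => ~ E w)
| gs_union : forall E : nat -> Omega -> Prop,
    (forall n, gen_sigma Y V (E n)) -> gen_sigma Y V (fun w => exists n, E n w).

(** * Words over {0,1} (false = 0, true = 1) *)

Definition word := list bool.

Definition strict_ext (u v : word) : Prop := exists w, w <> nil /\ v = u ++ w.

(** real representative of x_u : sum_{j=1}^{|u|} u_j 2^{-j} *)
Fixpoint xval (u : word) : R :=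
  match u with
  | nil => 0
  | b :: u' => ((if b then 1 else 0) + xval u') / 2
  end.

(** * The torus T = R/Z, points represented by real numbers *)
(** quotient distance d(phi x, phi y) = distance from x - y to the nearest integer *)
Definition tdist (x y : R) : R :=
  Rmin (frac_part (x - y)) (1 - frac_part (x - y)).

Definition is_prob_on_pairs (nu : bool -> nat -> bool * bool -> R) : Prop :=
  forall i j, (forall p, 0 <= nu i j p) /\
    nu i j (false, false) + nu i j (false, true) + nu i j (true, false)
      + nu i j (true, true) = 1.

Definition nuA (nu : bool -> nat -> bool * bool -> R) (i : bool) (j : nat)
           (A : bool * bool -> bool) : R :=
  (if A (false, false) then nu i j (false, false) else 0)
  + (if A (false, true) then nu i j (false, true) else 0)
  + (if A (true, false) then nu i j (true, false) else 0)
  + (if A (true, true) then nu i j (true, true) else 0).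

(** P((X_{u0},X_{u1}) in A | G_u) = nu_{X_u,|u|}(A), G_u = sigma(X_v : v not in uU^* ),
    written out with the defining property of conditional probability
    (the candidate nu_{X_u,|u|}(A) being G_u-measurable and taking two values). *)
Definition branching_property {Omega : Type} (P : (Omega -> Prop) -> R)
  (nu : bool -> nat -> bool * bool -> R) (X : word -> Omega -> bool) : Prop :=
  forall (u : word) (A : bool * bool -> bool) (G : Omega -> Prop),
    gen_sigma X (fun v => ~ strict_ext u v) G ->
    P (fun w => A (X (u ++ false :: nil) w, X (u ++ true :: nil) w) = true /\ G w)
    = nuA nu false (length u) A * P (fun w => G w /\ X u w = false)
      + nuA nu true (length u) A * P (fun w => G w /\ X u w = true).

Definition eta (nu : bool -> nat -> bool * bool -> R) (j : nat) : R :=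
  1 - nu false j (false, false).

Definition diverges (f : nat -> R) : Prop :=
  forall M : R, exists n : nat, M < sum_f_R0 f n.

Definition htilde_set (nu : bool -> nat -> bool * bool -> R) (hb : R) (h : R) : Prop :=
  0 < h /\ diverges (fun j => Rpower 2 ((1 - hb / h) * INR j) * eta nu j).

Definition is_glb (S : R -> Prop) (x : R) : Prop :=
  (forall h, S h -> x <= h) /\ (forall y, (forall h, S h -> y <= h) -> y <= x).

(** t = Some x means h~ = x (infimum); t = None means h~ = +infinity (empty set). *)
Definition is_htilde (nu : bool -> nat -> bool * bool -> R) (hb : R) (t : option R) : Prop :=
  match t with
  | None => forall h, ~ htilde_set nu hb h
  | Some x => is_glb (htilde_set nu hb) x
  end.

Definition above_htilde (t : option R) (alpha : R) : Prop :=
  match t with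
  | None => False
  | Some x => x < alpha
  end.

(** x in L_alpha (for the realization w): infinitely many u in S with
    d(x, x_u) < 2^{-hb |u| / alpha}; "infinitely many" = not contained in a finite list. *)
Definition in_L {Omega : Type} (X : word -> Omega -> bool) (hb alpha : R)
           (w : Omega) (x : R) : Prop :=
  ~ exists l : list word, forall u : word,
      X u w = true ->
      tdist x (xval u) < Rpower 2 (- (hb * INR (length u) / alpha)) ->
      In u l.

(* Main.v *)
Require Import Defs.
From Stdlib Require Import Reals List Lra Lia ZArith Classical FinFun FunctionalExtensionality PropExtensionality.
Open Scope R_scope.

Lemma set_ext {Omega : Type} (A B : Omega -> Prop) :
  (forall w, A w <-> B w) -> A = B.
Proof. intro H; apply functional_extensionality; intro w; apply propositional_extensionality; auto. Qed.

Section SA.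
Context {Omega : Type} (S : (Omega -> Prop) -> Prop) (HS : is_sigma_algebra S).

Lemma sa_ext {A B} : S A -> (forall w, A w <-> B w) -> S B.
Proof. intros HA H; rewrite <- (set_ext _ _ H); auto. Qed.

Lemma sa_empty : S (fun _ => False).
Proof. apply (sa_ext (sa_compl _ HS _ (sa_full _ HS))); firstorder. Qed.

Lemma sa_or A B : S A -> S B -> S (fun w => A w \/ B w).
Proof.
  intros HA HB.
  apply (@sa_ext (fun w => exists n:nat, (if Nat.eqb n 0 then A else B) w)).
  - apply (sa_union _ HS); intro n; destruct (Nat.eqb n 0); auto.
  - intro w; split.
    + intros [n Hn]; destruct (Nat.eqb n 0); auto.
    + intros [H|H]; [exists 0%nat | exists 1%nat]; auto.
Qed.

Lemma sa_not A : S A -> S (fun w => ~ A w).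
Proof. apply (sa_compl _ HS). Qed.

Lemma sa_and A B : S A -> S B -> S (fun w => A w /\ B w).
Proof.
  intros HA HB.
  apply (sa_ext (sa_not _ (sa_or _ _ (sa_not _ HA) (sa_not _ HB)))).
  intro w; split; [intro H; apply not_or_and in H; destruct H; split; apply NNPP; auto|tauto].
Qed.

Lemma sa_exn (E : nat -> Omega -> Prop) : (forall n, S (E n)) -> S (fun w => exists n, E n w).
Proof. apply (sa_union _ HS). Qed.

Lemma sa_alln (E : nat -> Omega -> Prop) : (forall n, S (E n)) -> S (fun w => forall n, E n w).
Proof.
  intro H.
  apply (sa_ext (sa_not _ (sa_exn (fun n w => ~ E n w) (fun n => sa_not _ (H n))))).
  intro w; split.
  - intros H1 n; apply NNPP; intro H2; apply H1; eauto.
  - intros H1 [n Hn]; auto.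
Qed.

Lemma sa_prop_imp (Q : Prop) A : S A -> S (fun w => Q -> A w).
Proof.
  intro HA; destruct (classic Q) as [q|q].
  - apply (sa_ext HA); intuition.
  - apply (sa_ext (sa_full _ HS)); intuition.
Qed.

Lemma sa_prop_and (Q : Prop) A : S A -> S (fun w => Q /\ A w).
Proof.
  intro HA; destruct (classic Q) as [q|q].
  - apply (sa_ext HA); intuition.
  - apply (sa_ext sa_empty); intuition.
Qed.

Lemma sa_all_list {T} (l : list T) (E : T -> Omega -> Prop) :
  (forall x, In x l -> S (E x)) -> S (fun w => forall x, In x l -> E x w).
Proof.
  induction l as [|a l IH]; intro H.
  - apply (sa_ext (sa_full _ HS)); simpl; intuition.
  - apply (sa_ext (sa_and _ _ (H a (or_introl eq_refl)) (IH (fun x Hx => H x (or_intror Hx))))).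
    intro w; simpl; split; [intros [H1 H2] x [<-|Hx]; auto | intro H1; split; auto].
Qed.

Lemma sa_ex_list {T} (l : list T) (E : T -> Omega -> Prop) :
  (forall x, In x l -> S (E x)) -> S (fun w => exists x, In x l /\ E x w).
Proof.
  induction l as [|a l IH]; intro H.
  - apply (sa_ext sa_empty); simpl; firstorder.
  - apply (sa_ext (sa_or _ _ (H a (or_introl eq_refl)) (IH (fun x Hx => H x (or_intror Hx))))).
    intro w; simpl; split.
    + intros [H1|[x [H1 H2]]]; eauto.
    + intros [x [[<-|Hx] H2]]; eauto.
Qed.
End SA.

Lemma gen_sigma_sa {Omega I : Type} (Y : I -> Omega -> bool) (V : I -> Prop) :
  is_sigma_algebra (gen_sigma Y V).
Proof. constructor; [apply gs_full | apply gs_compl | apply gs_union]. Qed.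

Lemma gen_sigma_mono {Omega I : Type} (Y : I -> Omega -> bool) (V V' : I -> Prop) E :
  (forall v, V v -> V' v) -> gen_sigma Y V E -> gen_sigma Y V' E.
Proof.
  intros HV H; induction H.
  - apply gs_base; auto.
  - apply gs_full.
  - apply gs_compl; auto.
  - apply gs_union; auto.
Qed.

Lemma gen_sigma_sub {Omega I : Type} (Y : I -> Omega -> bool) (V : I -> Prop) F E :
  is_sigma_algebra F -> (forall v b, F (fun w => Y v w = b)) -> gen_sigma Y V E -> F E.
Proof.
  intros HF HY H; induction H.
  - apply HY.
  - apply (sa_full _ HF).
  - apply (sa_compl _ HF); auto.
  - apply (sa_union _ HF); auto.
Qed.

Lemma sum_const0 n : sum_f_R0 (fun _ => 0) n = 0.
Proof. induction n; simpl; lra. Qed.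

Lemma infsum0 : infinite_sum (fun _ => 0) 0.
Proof. intros eps He; exists 0%nat; intros n _; rewrite sum_const0; unfold R_dist; rewrite Rminus_0_r, Rabs_R0; auto. Qed.

Section Prob.
Context {Omega : Type} (F : (Omega -> Prop) -> Prop) (P : (Omega -> Prop) -> R)
  (HP : is_probability F P).

Let HS := pr_sigma _ _ HP.

Lemma P_ext A B : (forall w, A w <-> B w) -> P A = P B.
Proof. intro H; rewrite (set_ext _ _ H); auto. Qed.

Lemma P_empty : P (fun _ => False) = 0.
Proof.
  assert (H := pr_countably_additive _ _ HP (fun _ _ => False) (fun _ => sa_empty _ HS)
     (fun _ _ _ _ h _ => h)). cbv beta in H.
  rewrite (P_ext (fun w => exists n:nat, False) (fun _ => False)) in H by firstorder.
  set (c := P (fun _ => False)) in *.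
  assert (Hc : 0 <= c) by (apply (pr_nonneg _ _ HP); apply (sa_empty _ HS)).
  destruct (Rle_lt_or_eq_dec _ _ Hc) as [Hlt|]; [|auto].
  exfalso. destruct (H c Hlt) as [N HN].
  specialize (HN (S N) (Nat.le_succ_diag_r N)).
  assert (Hs : forall n, sum_f_R0 (fun _ => c) n = INR (S n) * c).
  { induction n; [simpl; lra| rewrite tech5, IHn, (S_INR (S n)); lra]. }
  rewrite Hs in HN; unfold R_dist in HN.
  rewrite Rabs_right in HN.
  - assert (0 <= INR N) by apply pos_INR. rewrite (S_INR (S N)), (S_INR N) in HN. nra.
  - assert (0 <= INR N) by apply pos_INR. rewrite (S_INR (S N)), (S_INR N). nra.
Qed.

Lemma sum_2 (f : nat -> R) n : (forall k, (2 <= k)%nat -> f k = 0) -> (1 <= n)%nat ->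
  sum_f_R0 f n = f 0%nat + f 1%nat.
Proof.
  intros Hf Hn; induction n; [lia|].
  destruct n; [simpl; auto|]. rewrite tech5, IHn by lia. rewrite (Hf (S (S n))) by lia; lra.
Qed.

Lemma P_add A B : F A -> F B -> (forall w, A w -> B w -> False) ->
  P (fun w => A w \/ B w) = P A + P B.
Proof.
  intros HA HB Hd.
  set (E := fun n:nat => match n with 0%nat => A | 1%nat => B | _ => fun _ => False end).
  assert (H := pr_countably_additive _ _ HP E).
  assert (HE : forall n, F (E n)) by (intros [|[|n]]; simpl; auto; apply (sa_empty _ HS)).
  specialize (H HE).
  assert (Hdis : forall m n, m <> n -> forall w, E m w -> E n w -> False).
  { intros [|[|m]] [|[|n]] Hmn w; simpl; try tauto; try lia; eauto. }
  specialize (H Hdis).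
  rewrite (P_ext (fun w => exists n, E n w) (fun w => A w \/ B w)) in H.
  2:{ intro w; split; [intros [[|[|n]] Hn]; simpl in Hn; tauto | intros [h|h]; [exists 0%nat|exists 1%nat]; auto]. }
  apply (uniqueness_sum _ _ _ H).
  intros eps He; exists 1%nat; intros n Hn.
  rewrite (sum_2 (fun n => P (E n)) n); auto.
  - simpl; unfold R_dist; rewrite Rminus_diag_eq, Rabs_R0; auto.
  - intros [|[|k]] Hk; try lia; simpl; apply P_empty.
Qed.

Lemma P_nonneg A : F A -> 0 <= P A.
Proof. apply (pr_nonneg _ _ HP). Qed.

Lemma P_mono A B : F A -> F B -> (forall w, A w -> B w) -> P A <= P B.
Proof.
  intros HA HB H.
  assert (HBA : F (fun w => B w /\ ~ A w)) by (apply sa_and; auto; apply sa_not; auto).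
  rewrite (P_ext B (fun w => A w \/ (B w /\ ~ A w))).
  - rewrite P_add; auto. assert (0 <= P (fun w => B w /\ ~ A w)) by (apply P_nonneg; auto). lra.
    intros w h [_ h']; auto.
  - intro w; split; [intro h; destruct (classic (A w)); auto|intros [h|[h _]]; auto].
Qed.

Lemma P_le1 A : F A -> P A <= 1.
Proof. intro HA; rewrite <- (pr_full _ _ HP); apply P_mono; auto. apply (sa_full _ HS). Qed.

Lemma P_compl A : F A -> P (fun w => ~ A w) = 1 - P A.
Proof.
  intro HA. rewrite <- (pr_full _ _ HP).
  rewrite (P_ext (fun _ => True) (fun w => A w \/ ~ A w)) by (intro w; split; [intros _; apply classic|auto]).
  rewrite P_add; auto; [lra| apply sa_not; auto].
Qed.

Lemma P_subadd A B : F A -> F B -> P (fun w => A w \/ B w) <= P A + P B.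
Proof.
  intros HA HB.
  assert (HBA : F (fun w => B w /\ ~ A w)) by (apply sa_and; auto; apply sa_not; auto).
  rewrite (P_ext (fun w => A w \/ B w) (fun w => A w \/ (B w /\ ~ A w))).
  - rewrite P_add; auto. 2:{ intros w h [_ h']; auto. }
    assert (P (fun w => B w /\ ~ A w) <= P B) by (apply P_mono; auto; tauto). lra.
  - intro w; split; [intros [h|h]; destruct (classic (A w)); auto|intros [h|[h _]]; auto].
Qed.

Lemma P_subadd_list {T} (l : list T) (E : T -> Omega -> Prop) :
  (forall x, In x l -> F (E x)) ->
  P (fun w => exists x, In x l /\ E x w) <= fold_right (fun x acc => P (E x) + acc) 0 l.
Proof.
  induction l as [|a l IH]; intro H; simpl.
  - rewrite (P_ext _ (fun _ => False)) by firstorder. rewrite P_empty; lra.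
  - rewrite (P_ext _ (fun w => E a w \/ exists x, In x l /\ E x w)).
    + assert (H1 : F (E a)) by (apply H; simpl; auto).
      assert (H2 : F (fun w => exists x, In x l /\ E x w)) by (apply sa_ex_list; auto; intros x Hx; apply H; simpl; auto).
      assert (H3 := P_subadd _ _ H1 H2).
      assert (P (fun w => exists x, In x l /\ E x w) <= fold_right (fun x acc => P (E x) + acc) 0 l) by (apply IH; intros x Hx; apply H; simpl; auto). lra.
    + intro w; split; [intros [x [[<-|Hx] h]]; eauto|intros [h|[x [Hx h]]]; eauto].
Qed.

Lemma P_null_union (A : nat -> Omega -> Prop) :
  (forall n, F (A n)) -> (forall n, P (A n) = 0) -> P (fun w => exists n, A n w) = 0.
Proof.
  intros HA H0.
  set (B := fun n w => A n w /\ ~ exists i, (i < n)%nat /\ A i w).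
  assert (HB : forall n, F (B n)).
  { intro n; apply sa_and; auto; apply sa_not; auto; apply sa_exn; auto; intro i; apply sa_prop_and; auto. }
  assert (Hd : forall m n, m <> n -> forall w, B m w -> B n w -> False).
  { intros m n Hmn w [h1 h2] [h3 h4].
    destruct (Nat.lt_gt_cases m n) as [[h|h] _]; auto; [apply h4|apply h2]; eauto. }
  assert (H := pr_countably_additive _ _ HP B HB Hd).
  rewrite (P_ext (fun w => exists n, B n w) (fun w => exists n, A n w)) in H.
  - apply (uniqueness_sum (fun n => P (B n))); auto.
    replace (fun n => P (B n)) with (fun _ : nat => 0). apply infsum0.
    apply functional_extensionality; intro n.
    apply Rle_antisym; [apply P_nonneg; auto|rewrite <- (H0 n); apply P_mono; auto; intros w [h _]; auto].
  - intro w; split; [intros [n [h _]]; eauto|].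
    intros [n Hn]. induction n as [n IH] using (well_founded_induction Wf_nat.lt_wf).
    destruct (classic (exists i, (i < n)%nat /\ A i w)) as [[i [Hi Ai]]|hn]; [apply (IH i); auto|].
    exists n; split; auto.
Qed.
End Prob.

Fixpoint words (n : nat) : list word :=
  match n with
  | O => nil :: nil
  | S n => map (cons false) (words n) ++ map (cons true) (words n)
  end.

Lemma words_In n u : In u (words n) <-> length u = n.
Proof.
  revert u; induction n as [|n IH]; intro u; simpl.
  - split; [intros [<-|[]]; auto| destruct u; simpl; auto; discriminate].
  - rewrite in_app_iff, !in_map_iff. split.
    + intros [[v [<- Hv]]|[v [<- Hv]]]; simpl; f_equal; apply IH; auto.
    + destruct u as [|b u]; simpl; [discriminate|]. intro H; injection H; intro H'.
      destruct b; [right|left]; exists u; split; auto; apply IH; auto.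
Qed.




Lemma words_NoDup n : NoDup (words n).
Proof.
  induction n; simpl; [constructor; auto; constructor|].
  apply NoDup_app.
  - apply FinFun.Injective_map_NoDup; auto. intros a b H; injection H; auto.
  - apply FinFun.Injective_map_NoDup; auto. intros a b H; injection H; auto.
  - intros x H1 H2. apply in_map_iff in H1, H2. destruct H1 as [a [<- _]]; destruct H2 as [b [H _]]; discriminate.
Qed.

Lemma xval_bounds v : 0 <= xval v < 1.
Proof. induction v as [|b v IH]; simpl; [lra|]. destruct b; lra. Qed.

Lemma xval_app w v : xval (w ++ v) = xval w + xval v / 2 ^ (length w).
Proof.
  induction w as [|b w IH]; simpl; [field|].
  rewrite IH. field. apply pow_nonzero; lra.
Qed.

Lemma xval_app_bounds w v : xval w <= xval (w ++ v) < xval w + / 2 ^ (length w).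
Proof.
  rewrite xval_app. assert (H := xval_bounds v). assert (0 < 2 ^ length w) by (apply pow_lt; lra).
  unfold Rdiv. split.
  - assert (0 <= xval v * / 2 ^ length w) by (apply Rmult_le_pos; [lra| left; apply Rinv_0_lt_compat; auto]). lra.
  - apply Rplus_lt_compat_l. rewrite <- (Rmult_1_l (/ 2 ^ length w)) at 2.
    apply Rmult_lt_compat_r; [apply Rinv_0_lt_compat; auto| lra].
Qed.

Lemma exists_prefix m : forall y, 0 <= y < 1 ->
  exists w, length w = m /\ xval w <= y < xval w + / 2 ^ m.
Proof.
  induction m as [|m IH]; intros y Hy.
  - exists nil; simpl; split; auto; lra.
  - destruct (Rlt_le_dec y (1/2)) as [H|H].
    + destruct (IH (2 * y)) as [w [Hl Hw]]; [lra|].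
      exists (false :: w); simpl; split; [auto|]. rewrite Rinv_mult. lra.
    + destruct (IH (2 * y - 1)) as [w [Hl Hw]]; [lra|].
      exists (true :: w); simpl; split; [auto|]. rewrite Rinv_mult. lra.
Qed.

Lemma Int_part_char r z : IZR z <= r < IZR z + 1 -> Int_part r = z.
Proof.
  intros [H1 H2].
  assert (Hu : (z+1)%Z = up r) by (apply tech_up; rewrite plus_IZR; simpl; lra).
  unfold Int_part; rewrite <- Hu; lia.
Qed.

Lemma tdist_le x z : Rabs (frac_part x - z) < 1 -> tdist x z <= Rabs (frac_part x - z).
Proof.
  intro H. set (e := frac_part x - z) in *.
  assert (Hx : x - z = IZR (Int_part x) + e) by (unfold e, frac_part; ring).
  unfold tdist. rewrite Hx.
  destruct (Rle_lt_dec 0 e) as [He|He].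
  - assert (Hf : frac_part (IZR (Int_part x) + e) = e).
    { assert (Hi : Int_part (IZR (Int_part x) + e) = Int_part x).
      { apply Int_part_char. rewrite Rabs_right in H by lra. lra. }
      unfold frac_part at 1. rewrite Hi. ring. }
    rewrite Hf, Rabs_right by lra. apply Rmin_l.
  - assert (Hf : frac_part (IZR (Int_part x) + e) = e + 1).
    { assert (Hi : Int_part (IZR (Int_part x) + e) = (Int_part x - 1)%Z).
      { apply Int_part_char. rewrite Rabs_left in H by lra. rewrite minus_IZR. lra. }
      unfold frac_part at 1. rewrite Hi, minus_IZR. ring. }
    rewrite Hf, Rabs_left by lra. eapply Rle_trans; [apply Rmin_r|lra].
Qed.

Lemma words_length n : length (words n) = Nat.pow 2 n.
Proof. induction n; [reflexivity|]. cbn [words]. rewrite length_app, !length_map. change (list bool) with word. rewrite IHn. simpl. lia. Qed.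

Lemma T_closed r n : sum_f_R0 (fun j => (INR j + 1) * r ^ j) n * (1 - r) ^ 2
  = 1 - (INR n + 2) * r ^ (S n) + (INR n + 1) * r ^ (S (S n)).
Proof.
  induction n.
  - simpl; ring.
  - rewrite tech5, Rmult_plus_distr_r, IHn, S_INR. simpl. ring.
Qed.

Lemma T_bound r n : 0 <= r < 1 -> sum_f_R0 (fun j => (INR j + 1) * r ^ j) n <= / (1 - r) ^ 2.
Proof.
  intro Hr.
  assert (Hp : 0 < (1 - r) ^ 2) by (apply pow_lt; lra).
  assert (H := T_closed r n).
  assert (Hk : (INR n + 1) * r ^ S (S n) <= (INR n + 2) * r ^ S n).
  { simpl. assert (0 <= r ^ n) by (apply pow_le; lra). assert (0 <= INR n) by apply pos_INR.
    assert (0 <= r * r ^ n) by (apply Rmult_le_pos; lra).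
    assert (r * (r * r ^ n) <= r * r ^ n) by (rewrite <- (Rmult_1_l (r * r^n)) at 2; apply Rmult_le_compat_r; lra).
    nra. }
  apply (Rmult_le_reg_r ((1 - r) ^ 2)); auto. rewrite H, Rinv_l by lra. lra.
Qed.

Lemma sum_mono (f : nat -> R) a b : (forall j, 0 <= f j) -> (a <= b)%nat -> sum_f_R0 f a <= sum_f_R0 f b.
Proof.
  intros Hf Hab. induction Hab; [lra|]. rewrite tech5. specialize (Hf (S m)). lra.
Qed.

Lemma no_div (f : nat -> R) C r N : (forall j, 0 <= f j) -> 0 <= C -> 0 <= r < 1 ->
  (forall j, (N <= j)%nat -> f j <= C * ((INR j + 1) * r ^ j)) -> ~ diverges f.
Proof.
  intros Hf HC Hr Hb Hd.
  assert (Hall : forall n, sum_f_R0 f n <= sum_f_R0 f N + C * sum_f_R0 (fun j => (INR j + 1) * r ^ j) n).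
  { assert (Hpos : forall n, 0 <= sum_f_R0 (fun j => (INR j + 1) * r ^ j) n).
    { intro n; apply cond_pos_sum; intro j; apply Rmult_le_pos; [assert (0 <= INR j) by apply pos_INR; lra| apply pow_le; lra]. }
    induction n.
    - assert (sum_f_R0 f 0 <= sum_f_R0 f N) by (apply sum_mono; auto; lia).
      assert (0 <= C * sum_f_R0 (fun j => (INR j + 1) * r ^ j) 0) by (apply Rmult_le_pos; auto). lra.
    - destruct (Compare_dec.le_lt_dec (S n) N).
      + assert (sum_f_R0 f (S n) <= sum_f_R0 f N) by (apply sum_mono; auto).
        assert (0 <= C * sum_f_R0 (fun j => (INR j + 1) * r ^ j) (S n)) by (apply Rmult_le_pos; auto). lra.
      + rewrite !tech5. specialize (Hb (S n) ltac:(lia)). lra. }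
  destruct (Hd (sum_f_R0 f N + C * / (1 - r) ^ 2)) as [n Hn].
  specialize (Hall n). assert (H := T_bound r n Hr).
  assert (C * sum_f_R0 (fun j => (INR j + 1) * r ^ j) n <= C * / (1 - r) ^ 2) by (apply Rmult_le_compat_l; auto).
  lra.
Qed.

Lemma strict_ext_len u v : strict_ext u v -> (length u < length v)%nat.
Proof. intros [w [Hw ->]]. rewrite length_app. destruct w; [congruence|simpl; lia]. Qed.

Lemma strict_ext_child u u' b : length u' = length u -> u' <> u -> ~ strict_ext u (u' ++ b :: nil).
Proof.
  intros Hl Hne [w [Hw He]].
  assert (Hlw : length w = 1%nat).
  { apply (f_equal (@length bool)) in He. rewrite !length_app in He. simpl in He. lia. }
  destruct w as [|c [|d w]]; simpl in Hlw; try lia.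
  apply app_inj_tail in He. destruct He; congruence.
Qed.


Section Core.
Context {Omega : Type} (F : (Omega -> Prop) -> Prop) (P : (Omega -> Prop) -> R)
  (nu : bool -> nat -> bool * bool -> R) (X : word -> Omega -> bool)
  (HP : is_probability F P) (Hnu : is_prob_on_pairs nu)
  (HX : forall u b, F (fun w => X u w = b)) (HB : branching_property P nu X).

Let HS := pr_sigma _ _ HP.
Let Pe := @P_ext Omega P.

Definition Fj (j : nat) := gen_sigma X (fun v => (length v <= j)%nat).

Definition Zn (u : word) (w : Omega) : Prop :=
  X u w = false /\ X (u ++ false :: nil) w = false /\ X (u ++ true :: nil) w = false.

Lemma Fj_F j G : Fj j G -> F G.
Proof. intro H; eapply gen_sigma_sub; eauto. Qed.

Lemma Fj_mono j j' G : (j <= j')%nat -> Fj j G -> Fj j' G.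
Proof. intros Hj H; eapply gen_sigma_mono; [|exact H]; simpl; intros; lia. Qed.

Lemma Z_meas (V : word -> Prop) u : V u -> V (u ++ false :: nil) -> V (u ++ true :: nil) ->
  gen_sigma X V (Zn u).
Proof.
  intros H1 H2 H3. unfold Zn.
  apply sa_and; [apply gen_sigma_sa|apply gs_base; auto|].
  apply sa_and; [apply gen_sigma_sa|apply gs_base; auto|apply gs_base; auto].
Qed.

Lemma eta_le1 j : 0 <= 1 - eta nu j.
Proof. unfold eta. destruct (Hnu false j) as [H _]. specialize (H (false,false)). lra. Qed.

Lemma peel j (L : list word) : NoDup L -> (forall u, In u L -> length u = j) ->
  forall G, Fj j G ->
  P (fun w => (forall u, In u L -> Zn u w) /\ G w) <= (1 - eta nu j) ^ (length L) * P G.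
Proof.
  induction L as [|u L IH]; intros Hnd Hl G HG; simpl.
  - rewrite (Pe (fun w => (forall u, False -> Zn u w) /\ G w) G) by (intro w; tauto). lra.
  - inversion Hnd as [|? ? Hu HndL]; subst.
    assert (Hlu : length u = j) by (apply Hl; left; reflexivity).
    set (H := fun w => (forall u', In u' L -> Zn u' w) /\ G w /\ X u w = false).
    set (A := fun p : bool * bool => match p with (false,false) => true | _ => false end).
    assert (HH : gen_sigma X (fun v => ~ strict_ext u v) H).
    { unfold H. apply sa_and; [apply gen_sigma_sa| |apply sa_and; [apply gen_sigma_sa| |]].
      - apply sa_all_list; [apply gen_sigma_sa|]. intros u' Hu'.
        assert (Hl' : length u' = length u) by (rewrite Hlu; apply Hl; right; auto).
        assert (Hne : u' <> u) by (intro; subst; auto).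
        apply Z_meas.
        + intro Hs; apply strict_ext_len in Hs; lia.
        + apply strict_ext_child; auto.
        + apply strict_ext_child; auto.
      - eapply gen_sigma_mono; [|exact HG]. intros v Hv Hs; cbv beta in Hv; apply strict_ext_len in Hs; lia.
      - apply gs_base. intro Hs; apply strict_ext_len in Hs; lia. }
    assert (Hbr := HB u A H HH).
    assert (HFH : F H) by (eapply gen_sigma_sub; eauto).
    rewrite (Pe (fun w => A (X (u ++ false :: nil) w, X (u ++ true :: nil) w) = true /\ H w)
       (fun w => (forall u0, u = u0 \/ In u0 L -> Zn u0 w) /\ G w)) in Hbr.
    2:{ intro w; unfold H, A, Zn. split.
        - intros [Ha [HL [HG' Hx]]]. split; auto. intros u0 [<-|Hu0]; auto.
          destruct (X (u ++ false :: nil) w), (X (u ++ true :: nil) w); try discriminate; auto.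
        - intros [HL HG']. destruct (HL u (or_introl eq_refl)) as [h1 [h2 h3]].
          rewrite h2, h3. repeat split; auto; apply HL; auto. }
    rewrite Hbr.
    rewrite (Pe (fun w => H w /\ X u w = false) H) by (intro w; unfold H; tauto).
    rewrite (Pe (fun w => H w /\ X u w = true) (fun _ => False)).
    2:{ intro w; unfold H; split; [intros [[_ [_ h1]] h2]; congruence|tauto]. }
    rewrite (P_empty F P HP), Rmult_0_r, Rplus_0_r.
    assert (HnuA : nuA nu false (length u) A = 1 - eta nu j).
    { unfold nuA, A, eta; simpl. rewrite Hlu; ring. }
    rewrite HnuA.
    assert (HG' : Fj j (fun w => G w /\ X u w = false)).
    { apply sa_and; [apply gen_sigma_sa|auto|apply gs_base; lia]. }
    assert (IH' := IH HndL (fun u' h => Hl u' (or_intror h)) _ HG'). cbv beta in IH'.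
    rewrite (Pe (fun w => (forall u0, In u0 L -> Zn u0 w) /\ (G w /\ X u w = false)) H) in IH'
      by (intro w; unfold H; tauto).
    assert (P (fun w => G w /\ X u w = false) <= P G).
    { apply (P_mono F P HP); [apply (Fj_F j); auto|apply (Fj_F j); auto|tauto]. }
    assert (Hpe := eta_le1 j).
    assert (0 <= (1 - eta nu j) ^ length L) by (apply pow_le; auto).
    assert (P H <= (1 - eta nu j) ^ length L * P G).
    { eapply Rle_trans; [exact IH'|]. apply Rmult_le_compat_l; auto. }
    rewrite Rmult_assoc; apply Rmult_le_compat_l; auto.
Qed.

Lemma fold_bound {T} (l : list T) (g : T -> R) c :
  (forall x, In x l -> g x <= c) -> fold_right (fun x acc => g x + acc) 0 l <= INR (length l) * c.
Proof.
  induction l as [|a l IH]; intro H; [simpl; lra|]. change (length (a :: l)) with (S (length l)). rewrite S_INR. simpl fold_right.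
  assert (g a <= c) by (apply H; left; auto).
  assert (fold_right (fun x acc => g x + acc) 0 l <= INR (length l) * c) by (apply IH; intros; apply H; right; auto).
  lra.
Qed.

Definition Bad (j k : nat) (w : Omega) : Prop :=
  exists pre, In pre (words (j - k)) /\ forall v, In v (words k) -> Zn (pre ++ v) w.

Lemma Bad_meas j k : (k <= j)%nat -> Fj (S j) (Bad j k).
Proof.
  intro Hk. unfold Bad. apply sa_ex_list; [apply gen_sigma_sa|]. intros pre Hpre.
  apply sa_all_list; [apply gen_sigma_sa|]. intros v Hv.
  apply words_In in Hpre, Hv.
  apply Z_meas; rewrite ?length_app; simpl; rewrite ?length_app; simpl; lia.
Qed.

Lemma bad_bound j k G : (k <= j)%nat -> Fj j G ->
  P (fun w => Bad j k w /\ G w) <= 2 ^ (j - k) * ((1 - eta nu j) ^ (Nat.pow 2 k) * P G).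
Proof.
  intros Hk HG.
  rewrite (Pe _ (fun w => exists pre, In pre (words (j - k)) /\
      ((forall u, In u (map (app pre) (words k)) -> Zn u w) /\ G w))).
  2:{ intro w; unfold Bad; split.
      - intros [[pre [Hp Hv]] Hg]; exists pre; split; auto; split; auto.
        intros u Hu; apply in_map_iff in Hu; destruct Hu as [v [<- Hv']]; auto.
      - intros [pre [Hp [Hv Hg]]]; split; auto; exists pre; split; auto.
        intros v Hv'; apply Hv, in_map_iff; eauto. }
  eapply Rle_trans; [apply (P_subadd_list F P HP)|].
  - intros pre Hpre. apply sa_and; auto.
    + apply sa_all_list; auto. intros u _. eapply gen_sigma_sub; eauto. apply (Z_meas (fun _ => True)); auto.
    + apply (Fj_F j); auto.
  - replace (2 ^ (j - k)) with (INR (length (words (j - k)))) by (rewrite words_length, pow_INR; simpl; f_equal; ring).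
    apply fold_bound. intros pre Hpre.
    assert (H := peel j (map (app pre) (words k))).
    rewrite length_map, words_length in H. apply H; auto.
    + apply FinFun.Injective_map_NoDup; [intros a b Hab; eapply app_inv_head; eauto|apply words_NoDup].
    + intros u Hu; apply in_map_iff in Hu; destruct Hu as [v [<- Hv]].
      apply words_In in Hpre, Hv. rewrite length_app; lia.
Qed.

Section Chain.
Variable good : nat -> Prop.
Variable kf : nat -> nat.
Hypothesis Hkf : forall j, (kf j <= j)%nat.
Hypothesis Hgood : forall j, good j -> 2 ^ (j - kf j) * (1 - eta nu j) ^ (Nat.pow 2 (kf j)) <= / 2.

Definition Dv (N M : nat) (w : Omega) : Prop :=
  forall j, (N <= j)%nat -> (j <= M)%nat -> good j -> Bad j (kf j) w.

Lemma Dv_meas N M : Fj (S M) (Dv N M).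
Proof.
  apply (@sa_ext _ _ (fun w => forall j, In j (seq 0 (S M)) -> (N <= j)%nat -> good j -> Bad j (kf j) w)).
  - apply sa_all_list; [apply gen_sigma_sa|]. intros j Hj. apply in_seq in Hj.
    apply sa_prop_imp; [apply gen_sigma_sa|]. apply sa_prop_imp; [apply gen_sigma_sa|].
    apply (Fj_mono (S j)); [lia|]. apply Bad_meas; auto.
  - intro w; unfold Dv; split.
    + intros H j Hn Hm Hg; apply H; auto; apply in_seq; lia.
    + intros H j Hj Hn Hg; apply in_seq in Hj; apply H; auto; lia.
Qed.

Lemma Dv_decay N : (forall N', exists j, (N' <= j)%nat /\ good j) ->
  forall r, exists M, P (Dv N M) <= (/ 2) ^ r.
Proof.
  intros Hinf r. induction r as [|r [M HM]].
  - exists 0%nat. simpl. apply (P_le1 F P HP). apply (Fj_F 1). apply Dv_meas.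
  - destruct (Hinf (S (Nat.max N M))) as [j [Hj Hg]].
    exists j. destruct j as [|j']; [lia|].
    rewrite (Pe (Dv N (S j')) (fun w => Bad (S j') (kf (S j')) w /\ Dv N j' w)).
    2:{ intro w; unfold Dv; split.
        - intro H; split; [apply H; auto; lia|]. intros i Hi1 Hi2 Hgi; apply H; auto.
        - intros [Hb H] i Hi1 Hi2 Hgi. destruct (Nat.eq_dec i (S j')) as [->|]; auto. apply H; auto; lia. }
    eapply Rle_trans; [apply bad_bound; auto; apply Dv_meas|].
    rewrite <- Rmult_assoc.
    assert (HPD : P (Dv N j') <= P (Dv N M)).
    { apply (P_mono F P HP); [apply (Fj_F (S j')), Dv_meas|apply (Fj_F (S M)), Dv_meas|].
      intros w H i Hi1 Hi2 Hgi; apply H; auto; lia. }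
    assert (0 <= P (Dv N j')) by (apply (P_nonneg F P HP), (Fj_F (S j')), Dv_meas).
    assert (0 <= 2 ^ (S j' - kf (S j')) * (1 - eta nu (S j')) ^ Nat.pow 2 (kf (S j'))).
    { apply Rmult_le_pos; apply pow_le; [lra|apply eta_le1]. }
    specialize (Hgood _ Hg).
    apply Rle_trans with (/2 * P (Dv N j')); [apply Rmult_le_compat_r; auto|].
    simpl pow. apply Rmult_le_compat_l; lra.
Qed.

Lemma tail_null N : (forall N', exists j, (N' <= j)%nat /\ good j) ->
  F (fun w => forall j, (N <= j)%nat -> good j -> Bad j (kf j) w) /\
  P (fun w => forall j, (N <= j)%nat -> good j -> Bad j (kf j) w) = 0.
Proof.
  intro Hinf.
  assert (HF : F (fun w => forall j, (N <= j)%nat -> good j -> Bad j (kf j) w)).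
  { apply sa_alln; auto; intro j. apply sa_prop_imp; auto. apply sa_prop_imp; auto.
    apply (Fj_F (S j)), Bad_meas; auto. }
  split; auto.
  set (p := P _).
  assert (Hp0 : 0 <= p) by (apply (P_nonneg F P HP); auto).
  assert (Hr : forall r, p <= (/ 2) ^ r).
  { intro r; destruct (Dv_decay N Hinf r) as [M HM]. eapply Rle_trans; [|exact HM].
    apply (P_mono F P HP); auto; [apply (Fj_F (S M)), Dv_meas|]. intros w H j Hj1 Hj2 Hg; auto. }
  destruct (Rle_lt_or_eq_dec _ _ Hp0) as [Hlt|]; [|auto].
  destruct (pow_lt_1_zero (/ 2) ltac:(rewrite Rabs_right; lra) p Hlt) as [r Hr'].
  specialize (Hr' r (le_n r)). specialize (Hr r).
  rewrite Rabs_right in Hr' by (apply Rle_ge, pow_le; lra). lra.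
Qed.
End Chain.
End Core.

Lemma exp_le_mono x y : x <= y -> exp x <= exp y.
Proof. intro H; destruct (Rle_lt_or_eq_dec _ _ H) as [h|h]; [left; apply exp_increasing; auto|rewrite h; lra]. Qed.

Lemma exp_pow_nat x n : exp x ^ n = exp (INR n * x).
Proof.
  induction n; simpl.
  - rewrite Rmult_0_l, exp_0; auto.
  - rewrite IHn, <- exp_plus. f_equal. destruct n; simpl; ring.
Qed.

Lemma Rpower_pow_mult a j : Rpower 2 (a * INR j) = Rpower 2 a ^ j.
Proof.
  rewrite <- Rpower_pow by (unfold Rpower; apply exp_pos). rewrite Rpower_mult; auto.
Qed.

Lemma pow2_Rpower k : 2 ^ k = Rpower 2 (INR k).
Proof. rewrite Rpower_pow; auto; lra. Qed.

Lemma exp_bound eta j k : 0 <= eta <= 1 -> (k <= j)%nat -> INR (S j) <= eta * 2 ^ k ->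
  2 ^ (j - k) * (1 - eta) ^ (Nat.pow 2 k) <= / 2.
Proof.
  intros He Hk Hj.
  assert (H1 : (1 - eta) ^ (Nat.pow 2 k) <= exp (- INR (S j))).
  { apply Rle_trans with (exp (- eta) ^ Nat.pow 2 k).
    - apply pow_incr; split; [lra|]. assert (h := exp_ineq1_le (- eta)). lra.
    - rewrite exp_pow_nat, pow_INR. apply exp_le_mono. simpl INR at 1. replace (1+1) with 2 by ring. lra. }
  assert (He1 : 2 < exp 1) by (assert (h := exp_ineq1 1); lra).
  assert (H2 : 2 ^ (j - k) <= exp (INR j)).
  { eapply Rle_trans; [apply Rle_pow; [lra| apply (Nat.le_sub_l j k)]|].
    apply Rle_trans with (exp 1 ^ j); [apply pow_incr; split; [lra| left; exact He1]|].
    rewrite exp_pow_nat, Rmult_1_r; lra. }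
  eapply Rle_trans; [apply Rmult_le_compat; [apply pow_le; lra|apply pow_le; lra|exact H2|exact H1]|].
  rewrite <- exp_plus, S_INR. replace (INR j + - (INR j + 1)) with (-1) by ring.
  replace (-1) with (- (1)) by ring. rewrite exp_Ropp. apply Rinv_le_contravar; lra.
Qed.

Lemma eta_bounds nu j : is_prob_on_pairs nu -> 0 <= eta nu j <= 1.
Proof.
  intro H; destruct (H false j) as [H1 H2]. unfold eta.
  assert (h1 := H1 (false,false)); assert (h2 := H1 (false,true)); assert (h3 := H1 (true,false)); assert (h4 := H1 (true,true)).
  lra.
Qed.

Lemma htilde_lower nu hb h : is_prob_on_pairs nu -> 0 < hb -> htilde_set nu hb h -> hb <= h.
Proof.
  intros Hnu Hhb [Hh Hd].
  destruct (Rle_lt_dec hb h) as [|Hlt]; auto. exfalso.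
  set (a := 1 - hb / h).
  assert (Ha : a < 0).
  { unfold a. assert (1 < hb / h) by (apply (Rmult_lt_reg_r h); auto; unfold Rdiv; rewrite Rmult_assoc, Rinv_l; lra). lra. }
  apply (no_div (fun j => Rpower 2 (a * INR j) * eta nu j) 1 (Rpower 2 a) 0); auto.
  - intro j. apply Rmult_le_pos; [unfold Rpower; left; apply exp_pos|apply eta_bounds; auto].
  - lra.
  - split; [unfold Rpower; left; apply exp_pos|].
    rewrite <- (Rpower_O 2) by lra. apply Rpower_lt; lra.
  - intros j _. rewrite Rpower_pow_mult. fold a.
    assert (0 <= Rpower 2 a ^ j) by (apply pow_le; unfold Rpower; left; apply exp_pos).
    assert (he := eta_bounds nu j Hnu). assert (0 <= INR j) by apply pos_INR.
    assert (Rpower 2 a ^ j * eta nu j <= Rpower 2 a ^ j) by (rewrite <- (Rmult_1_r (Rpower 2 a ^ j)) at 2; apply Rmult_le_compat_l; lra).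
    nra.
Qed.

Definition goodlvl nu hb alpha (s d j : nat) : Prop :=
  hb * INR (S j) / alpha <= INR (j - s * j / d) /\ INR (S j) <= eta nu j * 2 ^ (s * j / d).

Lemma kdiv_le s d j : (0 < d)%nat -> (s <= d)%nat -> (s * j / d <= j)%nat.
Proof.
  intros Hd Hs. apply Nat.Div0.div_le_upper_bound. nia.
Qed.

Lemma params nu hb alpha h : is_prob_on_pairs nu -> 0 < hb -> htilde_set nu hb h -> h < alpha ->
  exists s d, (0 < d)%nat /\ (s <= d)%nat /\ forall N, exists j, (N <= j)%nat /\ goodlvl nu hb alpha s d j.
Proof.
  intros Hnu Hhb Hset Hha.
  assert (Hhbh := htilde_lower nu hb h Hnu Hhb Hset).
  destruct Hset as [Hh Hdiv].
  set (a := 1 - hb / h) in *. set (b := 1 - hb / alpha).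
  assert (Ha0 : 0 <= a).
  { unfold a. assert (hb / h <= 1) by (apply (Rmult_le_reg_r h); auto; unfold Rdiv; rewrite Rmult_assoc, Rinv_l; lra). lra. }
  assert (Hab : a < b).
  { unfold a, b. assert (hb / alpha < hb / h); [|lra].
    unfold Rdiv; apply Rmult_lt_compat_l; auto; apply Rinv_lt_contravar; nra. }
  assert (Hb1 : b < 1).
  { unfold b. assert (0 < hb / alpha) by (unfold Rdiv; apply Rmult_lt_0_compat; [auto|apply Rinv_0_lt_compat; lra]). lra. }
  destruct (INR_unbounded (2 / (b - a) + 1)) as [d Hd].
  assert (Hdp : 0 < INR d).
  { assert (0 < 2 / (b - a)) by (unfold Rdiv; apply Rmult_lt_0_compat; [lra|apply Rinv_0_lt_compat; lra]). lra. }
  assert (Hdba : 2 < INR d * (b - a)).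
  { assert (h1 : 2 / (b - a) < INR d) by lra.
    apply (Rmult_lt_compat_r (b - a)) in h1; [|lra]. unfold Rdiv in h1. rewrite Rmult_assoc, Rinv_l in h1; lra. }
  set (z := up (INR d * a)).
  assert (Hz := archimed (INR d * a)). fold z in Hz.
  assert (Hz0 : (0 <= z)%Z) by (apply le_IZR; destruct Hz; nra).
  set (s := Z.to_nat z).
  assert (Hs : INR s = IZR z) by (unfold s; rewrite INR_IZR_INZ, Z2Nat.id; auto).
  assert (Hd0 : (0 < d)%nat) by (apply INR_lt; simpl; lra).
  assert (Hsd : (s <= d)%nat).
  { apply Nat.lt_le_incl, INR_lt. rewrite Hs. destruct Hz. nra. }
  exists s, d. split; auto. split; auto.
  set (c := INR s / INR d).
  assert (Hc1 : a < c).
  { unfold c. apply (Rmult_lt_reg_r (INR d)); auto. unfold Rdiv; rewrite Rmult_assoc, Rinv_l by lra. rewrite Hs. destruct Hz; lra. }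
  assert (Hc2 : c + 1 / INR d < b).
  { unfold c. apply (Rmult_lt_reg_r (INR d)); auto. rewrite Rmult_plus_distr_r.
    unfold Rdiv; rewrite !Rmult_assoc, Rinv_l by lra. rewrite Hs. destruct Hz; lra. }
  assert (Hk1 : forall j, INR (s * j / d) <= c * INR j).
  { intro j. unfold c. apply (Rmult_le_reg_r (INR d)); auto.
    unfold Rdiv. replace (INR s * / INR d * INR j * INR d) with (INR s * INR j) by (field; lra).
    rewrite <- !mult_INR. apply le_INR. rewrite Nat.mul_comm. apply Nat.Div0.mul_div_le. }
  assert (Hk2 : forall j, c * INR j - 1 < INR (s * j / d)).
  { intro j. assert (H := Nat.mul_succ_div_gt (s * j) d ltac:(lia)).
    apply lt_INR in H. rewrite !mult_INR, S_INR in H.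
    unfold c. apply (Rmult_lt_reg_r (INR d)); auto.
    replace ((INR s / INR d * INR j - 1) * INR d) with (INR s * INR j - INR d) by (field; lra). lra. }
  assert (Hrad : forall j, (d <= j)%nat -> hb * INR (S j) / alpha <= INR (j - s * j / d)).
  { intros j Hj. rewrite minus_INR by (apply kdiv_le; auto).
    assert (Hhb2 : hb / alpha = 1 - b) by (unfold b; ring).
    replace (hb * INR (S j) / alpha) with ((1 - b) * INR (S j)) by (rewrite <- Hhb2; unfold Rdiv; ring).
    rewrite S_INR. specialize (Hk1 j).
    assert (HjR : INR d <= INR j) by (apply le_INR; auto).
    assert (1 / INR d * INR j >= 1).
    { unfold Rdiv. rewrite Rmult_1_l. apply Rle_ge. apply (Rmult_le_reg_l (INR d)); auto. rewrite <- Rmult_assoc, Rinv_r by lra. lra. }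
    assert ((b - c) * INR j >= 1).
    { assert (0 <= INR j) by apply pos_INR. nra. }
    nra. }
  assert (Heta : forall N, exists j, (N <= j)%nat /\ INR (S j) <= eta nu j * 2 ^ (s * j / d)).
  { apply NNPP. intro Hn. apply not_all_ex_not in Hn. destruct Hn as [N HN].
    apply (no_div (fun j => Rpower 2 (a * INR j) * eta nu j) 2 (Rpower 2 (a - c)) N); auto.
    - intro j. apply Rmult_le_pos; [unfold Rpower; left; apply exp_pos|apply eta_bounds; auto].
    - lra.
    - split; [unfold Rpower; left; apply exp_pos|].
      rewrite <- (Rpower_O 2) by lra. apply Rpower_lt; lra.
    - intros j Hj.
      assert (Hlt : eta nu j * 2 ^ (s * j / d) < INR (S j)).
      { apply Rnot_le_lt. intro Hle. apply HN. exists j. auto. }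
      rewrite pow2_Rpower in Hlt.
      assert (Hp : 0 < Rpower 2 (INR (s * j / d))) by (unfold Rpower; apply exp_pos).
      assert (Hpa : 0 < Rpower 2 (a * INR j)) by (unfold Rpower; apply exp_pos).
      assert (Heta' : eta nu j < INR (S j) / Rpower 2 (INR (s * j / d))).
      { apply (Rmult_lt_reg_r (Rpower 2 (INR (s * j / d)))); auto. unfold Rdiv; rewrite Rmult_assoc, Rinv_l; lra. }
      assert (Hq : Rpower 2 (a * INR j) / Rpower 2 (INR (s * j / d)) <= 2 * Rpower 2 (a - c) ^ j).
      { rewrite <- Rpower_pow_mult. unfold Rdiv. rewrite <- Rpower_Ropp, <- Rpower_plus.
        assert (H21 : 2 * Rpower 2 ((a - c) * INR j) = Rpower 2 (1 + (a - c) * INR j)) by (rewrite Rpower_plus, Rpower_1; lra).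
        rewrite H21. apply Rle_Rpower; [lra|]. specialize (Hk2 j). nra. }
      rewrite <- S_INR.
      assert (Hev := eta_bounds nu j Hnu).
      apply Rle_trans with (Rpower 2 (a * INR j) * (INR (S j) / Rpower 2 (INR (s * j / d)))).
      + apply Rmult_le_compat_l; lra.
      + replace (Rpower 2 (a * INR j) * (INR (S j) / Rpower 2 (INR (s * j / d))))
          with (INR (S j) * (Rpower 2 (a * INR j) / Rpower 2 (INR (s * j / d)))) by (field; lra).
        assert (0 <= INR (S j)) by apply pos_INR.
        replace (2 * (INR (S j) * Rpower 2 (a - c) ^ j)) with (INR (S j) * (2 * Rpower 2 (a - c) ^ j)) by ring.
        apply Rmult_le_compat_l; auto. }
  intro N. destruct (Heta (Nat.max N d)) as [j [Hj Hej]].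
  exists j. split; [lia|]. split; auto. apply Hrad; lia.
Qed.

Lemma maxlen_spec (l : list word) u : In u l -> (length u < S (fold_right Nat.max 0%nat (map (@length bool) l)))%nat.
Proof.
  induction l as [|a l IH]; simpl; [tauto|]. intros [<-|H]; [lia|]. specialize (IH H). lia.
Qed.

Lemma radius_ok hb alpha alpha' n m : 0 < hb -> 0 < alpha' -> alpha' <= alpha ->
  hb * INR n / alpha' <= INR m -> / 2 ^ m <= Rpower 2 (- (hb * INR n / alpha)).
Proof.
  intros Hhb Ha' Haa H. rewrite Rpower_Ropp, pow2_Rpower.
  apply Rinv_le_contravar; [unfold Rpower; apply exp_pos|].
  apply Rle_Rpower; [lra|]. eapply Rle_trans; [|exact H].
  unfold Rdiv. apply Rmult_le_compat_l.
  - apply Rmult_le_pos; [lra|apply pos_INR].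
  - apply Rinv_le_contravar; lra.
Qed.

Theorem mainTheorem6 (Omega : Type) (F : (Omega -> Prop) -> Prop)
  (P : (Omega -> Prop) -> R) (nu : bool -> nat -> bool * bool -> R)
  (X : word -> Omega -> bool) (hb : R) (t : option R) :
  is_probability F P ->
  is_prob_on_pairs nu ->
  (forall u b, F (fun w => X u w = b)) ->
  branching_property P nu X ->
  0 < hb ->
  is_htilde nu hb t ->
  exists E : Omega -> Prop, F E /\ P E = 1 /\
    forall w, E w ->
      forall alpha : R, above_htilde t alpha ->
        forall x : R, in_L X hb alpha w x.
Proof.
  intros HP Hnu HX HB Hhb Ht.
  assert (HS := pr_sigma _ _ HP).
  destruct t as [xt|].
  2:{ exists (fun _ => True). split; [apply (sa_full _ HS)|]. split; [apply (pr_full _ _ HP)|].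
      intros w _ alpha []. }
  simpl in Ht. destruct Ht as [Hlb Hglb].
  assert (Hx0 : 0 <= xt) by (apply Hglb; intros h [Hh _]; lra).
  set (al := fun n : nat => xt + / INR (S n)).
  assert (Hal : forall n, xt < al n).
  { intro n; unfold al. assert (0 < / INR (S n)) by (apply Rinv_0_lt_compat, lt_0_INR; lia). lra. }
  set (kf := fun s d j : nat => (s * j / d)%nat).
  set (valid := fun n s d : nat => (0 < d)%nat /\ (s <= d)%nat /\
                   forall N, exists j, (N <= j)%nat /\ goodlvl nu hb (al n) s d j).
  set (E := fun w => forall n s d : nat, valid n s d -> forall N : nat, exists j,
              ((N <= j)%nat /\ goodlvl nu hb (al n) s d j) /\ ~ Bad X j (kf s d j) w).
  assert (HBadF : forall j k, F (Bad X j k)).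
  { intros j k. unfold Bad. apply sa_ex_list; auto; intros pre _. apply sa_all_list; auto; intros v _.
    unfold Zn. apply sa_and; auto. apply sa_and; auto. }
  assert (HE : F E).
  { unfold E. apply sa_alln; auto; intro n. apply sa_alln; auto; intro s. apply sa_alln; auto; intro d.
    apply sa_prop_imp; auto. apply sa_alln; auto; intro N. apply sa_exn; auto; intro j.
    apply sa_prop_and; auto. apply sa_not; auto. }
  assert (HT : forall n s d N, F (fun w => forall j, (N <= j)%nat -> goodlvl nu hb (al n) s d j -> Bad X j (kf s d j) w)).
  { intros n s d N. apply sa_alln; auto; intro j. apply sa_prop_imp; auto. apply sa_prop_imp; auto. }
  assert (Hnull : P (fun w => ~ E w) = 0).
  { rewrite (P_ext P _ (fun w => exists n s d N : nat, valid n s d /\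
        forall j, (N <= j)%nat -> goodlvl nu hb (al n) s d j -> Bad X j (kf s d j) w)).
    2:{ intro w; unfold E; split.
        - intro H. apply NNPP; intro H'. apply H. intros n s d Hv N. apply NNPP; intro H2. apply H'.
          exists n, s, d, N. split; auto. intros j Hj Hg. apply NNPP; intro Hb. apply H2. exists j; auto.
        - intros [n [s [d [N [Hv HT']]]]] HE'. destruct (HE' n s d Hv N) as [j [[Hj Hg] Hb]]. apply Hb, HT'; auto. }
    apply (P_null_union F P HP).
    { intro n. apply sa_exn; auto; intro s. apply sa_exn; auto; intro d. apply sa_exn; auto; intro N. apply sa_prop_and; auto. }
    intro n. apply (P_null_union F P HP).
    { intro s. apply sa_exn; auto; intro d. apply sa_exn; auto; intro N. apply sa_prop_and; auto. }
    intro s. apply (P_null_union F P HP).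
    { intro d. apply sa_exn; auto; intro N. apply sa_prop_and; auto. }
    intro d. apply (P_null_union F P HP).
    { intro N. apply sa_prop_and; auto. }
    intro N. destruct (classic (valid n s d)) as [Hv|Hv].
    - rewrite (P_ext P _ (fun w => forall j, (N <= j)%nat -> goodlvl nu hb (al n) s d j -> Bad X j (kf s d j) w)) by (intro w; tauto).
      destruct Hv as [Hd [Hs Hinf]].
      apply (tail_null F P nu X HP Hnu HX HB (goodlvl nu hb (al n) s d) (kf s d)); auto.
      + intro j; apply kdiv_le; auto.
      + intros j [_ Hg]. apply exp_bound; auto. apply eta_bounds; auto. apply kdiv_le; auto.
    - rewrite (P_ext P _ (fun _ => False)) by (intro w; tauto). apply (P_empty F P HP). }
  exists E. split; auto. split.
  { assert (H := P_compl F P HP E HE). lra. }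
  intros w Hw alpha Halpha x0. simpl in Halpha.
  destruct (INR_unbounded (/ (alpha - xt))) as [n0 Hn0].
  set (n := n0).
  assert (Haln : al n < alpha).
  { unfold al. assert (Hp : 0 < alpha - xt) by lra.
    assert (INR n0 < INR (S n0)) by (apply lt_INR; lia).
    assert (/ INR (S n) < alpha - xt); [|lra].
    rewrite <- (Rinv_inv (alpha - xt)). apply Rinv_lt_contravar.
    - apply Rmult_lt_0_compat; [apply Rinv_0_lt_compat; auto|apply lt_0_INR; lia].
    - unfold n; lra. }
  assert (Hh : exists h, htilde_set nu hb h /\ h < al n).
  { apply NNPP; intro Hn. assert (al n <= xt); [|specialize (Hal n); lra].
    apply Hglb. intros h Hh. apply Rnot_lt_le. intro Hlt. apply Hn; eauto. }
  destruct Hh as [h [Hh Hhn]].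
  destruct (params nu hb (al n) h Hnu Hhb Hh Hhn) as [s [d [Hd [Hs Hinf]]]].
  assert (Hv : valid n s d) by (split; auto).
  intros [l Hl].
  set (N := S (fold_right Nat.max 0%nat (map (@length bool) l))).
  destruct (Hw n s d Hv N) as [j [[HjN [Hrad Heta]] Hbad]].
  set (k := kf s d j) in *.
  assert (Hkj : (k <= j)%nat) by (apply kdiv_le; auto).
  set (m := (j - k)%nat) in *.
  destruct (base_fp x0) as [Hy0 Hy1].
  destruct (exists_prefix m (frac_part x0)) as [pre [Hpl Hpre]]; [lra|].
  assert (Hex : exists v, In v (words k) /\ ~ Zn X (pre ++ v) w).
  { apply NNPP; intro Hn. apply Hbad. exists pre. split; [apply words_In; auto|].
    intros v Hv'. apply NNPP; intro Hz. apply Hn; eauto. }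
  destruct Hex as [v [Hv' Hz]]. apply words_In in Hv'.
  assert (Hu : exists u', (exists v', u' = pre ++ v') /\ X u' w = true /\ (j <= length u' <= S j)%nat).
  { unfold Zn in Hz.
    assert (Hlen : length (pre ++ v) = j) by (rewrite length_app; lia).
    destruct (X (pre ++ v) w) eqn:E1.
    - exists (pre ++ v); repeat split; eauto; lia.
    - destruct (X ((pre ++ v) ++ false :: nil) w) eqn:E2.
      + exists ((pre ++ v) ++ false :: nil); repeat split; auto.
        * exists (v ++ false :: nil); rewrite app_assoc; auto.
        * rewrite length_app; simpl; lia.
        * rewrite length_app; simpl; lia.
      + destruct (X ((pre ++ v) ++ true :: nil) w) eqn:E3; [|tauto].
        exists ((pre ++ v) ++ true :: nil); repeat split; auto.
        * exists (v ++ true :: nil); rewrite app_assoc; auto.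
        * rewrite length_app; simpl; lia.
        * rewrite length_app; simpl; lia. }
  destruct Hu as [u' [[v' ->] [HX1 [Hl1 Hl2]]]].
  assert (Hnotin : ~ In (pre ++ v') l).
  { intro Hin. apply maxlen_spec in Hin. fold N in Hin. lia. }
  apply Hnotin, Hl; auto.
  assert (Hxb := xval_app_bounds pre v'). rewrite Hpl in Hxb.
  assert (Hpow : / 2 ^ m <= 1) by (rewrite <- Rinv_1; apply Rinv_le_contravar; [lra|]; apply pow_R1_Rle; lra).
  assert (Hab : Rabs (frac_part x0 - xval (pre ++ v')) < / 2 ^ m).
  { apply Rabs_def1; lra. }
  eapply Rle_lt_trans; [apply tdist_le; lra|].
  eapply Rlt_le_trans; [exact Hab|].
  apply (radius_ok hb alpha (al n)); auto.
  - specialize (Hal n); lra.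
  - lra.
  - eapply Rle_trans; [|exact Hrad]. unfold Rdiv. apply Rmult_le_compat_r.
    + left; apply Rinv_0_lt_compat; specialize (Hal n); lra.
    + apply Rmult_le_compat_l; [lra|]. apply le_INR; auto.
Qed.
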